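(* Let $V_0$ be a smooth function on an interval, $H_0=-\big(\frac{\mathrm d^2}{\mathrm dz^2}+V_0\big)$, and let $\psi_1,\dots,\psi_{N+1}$ be smooth functions with $H_0\psi_1=0$ and $H_0\psi_{j+1}=C_j\psi_j$ for $1\le j\le N$, where $C_j$ are nonzero constants. Set $\theta_0=1$, $\theta_j=Wr(\psi_1,\dots,\psi_j)$, and assume $\theta_j$ has no zeros for $1\le j\le N+1$. Then for each $1\le n\le N$, with $V_n=V_0+2(\log\theta_n)''$, both $\phi_n=\theta_{n+1}/\theta_n$ and $\phi_{n-1}^{-1}=\theta_{n-1}/\theta_n$ are annihilated by $\frac{\mathrm d^2}{\mathrm dz^2}+V_n$, and $$Wr(\phi_n,\phi_{n-1}^{-1})=C_n,\quad\text{equivalently}\quad \theta_{n-1}'\theta_{n+1}-\theta_{n-1}\theta_{n+1}'=C_n\,\theta_n^2 .$$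
   Context: $Wr(f_1,\dots,f_n)=\det\big(\frac{\mathrm d^{i-1}f_j}{\mathrm dz^{i-1}}\big)_{i,j=1}^n$ is the Wronskian and $'=\mathrm d/\mathrm dz$. *)

(* Defs.v *)
From HB Require Import structures.
From mathcomp Require Import all_boot all_order all_algebra.
From mathcomp Require Import all_classical all_reals all_analysis.
Set Implicit Arguments. Unset Strict Implicit. Unset Printing Implicit Defensive.
Import Order.TTheory GRing.Theory Num.Theory.
Import numFieldNormedType.Exports.
Local Open Scope ring_scope.

Definition smooth_on (R : realType) (I : set R) (f : R -> R) : Prop :=
  forall (k : nat) (x : R), I x -> derivable (derive1n k f) x 1.

Definition open_itv (R : realType) (a b : \bar R) : set R :=
  [set x | (a < x%:E)%E /\ (x%:E < b)%E].

Definition Wr (R : realType) (n : nat) (f : 'I_n -> R -> R) (z : R) : R :=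
  \det (\matrix_(i < n, j < n) derive1n i (f j) z).

Definition Wr2 (R : realType) (f g : R -> R) (z : R) : R :=
  Wr (fun k : 'I_2 => if val k == 0%N then f else g) z.

(* theta_j = Wr(psi_1, ..., psi_j); theta_0 = 1 (empty determinant). *)
Definition theta (R : realType) (psi : nat -> R -> R) (j : nat) (z : R) : R :=
  Wr (fun k : 'I_j => psi k.+1) z.

(* Main.v *)
Require Import Defs.
From HB Require Import structures.
From mathcomp Require Import all_boot all_order all_algebra.
From mathcomp Require Import all_classical all_reals all_analysis.
From mathcomp Require Import ring lra zify.
Import Order.TTheory GRing.Theory Num.Theory.
Import numFieldNormedType.Exports.
Local Open Scope ring_scope.
Lemma open_itv_near (R : realType) (a b : \bar R) z :
  open_itv a b z -> \forall t \near z, open_itv a b t.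
Proof.
case=> az zb.
have ha : \forall t \near z, (a < t%:E)%E.
  case: a az => [r| |] az.
  - rewrite lte_fin in az; move: (lt_nbhsr az); apply: filterS => t rt.
    by rewrite lte_fin.
  - by exfalso; move: az; rewrite ltNge leey.
  - by near=> t; exact: ltNyr.
have hb : \forall t \near z, (t%:E < b)%E.
  case: b zb => [r| |] zb.
  - rewrite lte_fin in zb; move: (lt_nbhsl zb); apply: filterS => t rt.
    by rewrite lte_fin.
  - by near=> t; exact: ltry.
  - by exfalso; move: zb; rewrite ltNge leNye.
by move: ha hb; apply: filterS2 => t h1 h2; split.
Unshelve. all: by end_near. Qed.
Set Implicit Arguments. Unset Strict Implicit.
Ltac gen_der := repeat match goal with
  | |- context [derive1n ?k ?f ?x] => generalize (derive1n k f x); intro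
  | |- context [derive1 ?f ?x] => generalize (derive1 f x); intro
  end.

Section Infra.
Variable R : realType.
Variable I : set R.
Hypothesis Iopen : forall z, I z -> \forall t \near z, I t.

Definition eqOn (f g : R -> R) := forall t, I t -> f t = g t.

Lemma eqOn_der (f g : R -> R) : eqOn f g -> forall k, eqOn (derive1n k f) (derive1n k g).
Proof.
move=> fg k; elim: k => [|k IH] t It; first by rewrite !derive1n0; apply: fg.
rewrite !derive1nS !derive1E; apply: near_eq_derive.
by move: (Iopen It); apply: filterS => s Is; apply: IH.
Qed.

Lemma smooth_derivable f t : smooth_on I f -> I t -> derivable f t 1.
Proof. by move=> sf It; have := sf 0%N t It; rewrite derive1n0. Qed.

Lemma smooth_D f : smooth_on I f -> smooth_on I (derive1 f).
Proof. by move=> sf k t It; rewrite -derive1Sn; apply: sf. Qed.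

Lemma smooth_Dn f k : smooth_on I f -> smooth_on I (derive1n k f).
Proof. by move=> sf j t It; rewrite /derive1n -iterD; apply: sf. Qed.

Lemma smooth_eqOn f g : eqOn f g -> smooth_on I g -> smooth_on I f.
Proof.
move=> fg sg k t It; apply: (near_eq_derivable _ (sg k t It)).
by move: (Iopen It); apply: filterS => s Is; rewrite (eqOn_der fg).
Qed.

Lemma smooth_cst c : smooth_on I (fun _ => c).
Proof.
move=> k t It; case: k => [|k]; first exact: derivable_cst.
suff -> : derive1n k.+1 (fun _ : R => c) = cst 0 by exact: derivable_cst.
elim: k => [|k IH]; first by apply/funext => s; rewrite derive1n1 derive1_cst.
by rewrite derive1nS IH; apply/funext => s; rewrite derive1_cst.
Qed.

Lemma der_add (f g : R -> R) t : derivable f t 1 -> derivable g t 1 ->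
  derive1 (fun s => f s + g s) t = derive1 f t + derive1 g t.
Proof. by move=> df dg; rewrite !derive1E (deriveD df dg). Qed.

Lemma der_mul (f g : R -> R) t : derivable f t 1 -> derivable g t 1 ->
  derive1 (fun s => f s * g s) t = derive1 f t * g t + f t * derive1 g t.
Proof. by move=> df dg; rewrite !derive1E (deriveM df dg) addrC mulrC. Qed.


Lemma derivable_eqOn (f g : R -> R) t : eqOn f g -> I t -> derivable g t 1 -> derivable f t 1.
Proof.
move=> fg It dg; apply: (near_eq_derivable _ dg).
by move: (Iopen It); apply: filterS => s Is; rewrite fg.
Qed.

Lemma der_eqOn (f g : R -> R) t : eqOn f g -> I t -> derive1 f t = derive1 g t.
Proof. by move=> fg It; have := eqOn_der fg 1 It; rewrite !derive1n1. Qed.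

Definition smoothk (k : nat) (f : R -> R) :=
  forall j, (j < k)%N -> forall t, I t -> derivable (derive1n j f) t 1.

Lemma smoothk_of k f : smooth_on I f -> smoothk k f.
Proof. by move=> sf j _; exact: sf. Qed.

Lemma Dn_add_k k u v : smoothk k u -> smoothk k v ->
  eqOn (derive1n k (fun s => u s + v s)) (fun t => derive1n k u t + derive1n k v t).
Proof.
elim: k => [|k IH] su sv t It; first by rewrite !derive1n0.
have IH' := IH (fun j jk => su j (ltnW jk)) (fun j jk => sv j (ltnW jk)).
rewrite !derive1nS (der_eqOn IH' It) der_add; [by []|exact: su|exact: sv].
Qed.

Lemma Dn_add u v : smooth_on I u -> smooth_on I v -> forall k,
  eqOn (derive1n k (fun s => u s + v s)) (fun t => derive1n k u t + derive1n k v t).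
Proof. by move=> su sv k; apply: Dn_add_k; exact: smoothk_of. Qed.

Lemma smooth_add u v : smooth_on I u -> smooth_on I v -> smooth_on I (fun s => u s + v s).
Proof.
move=> su sv k t It; apply: (derivable_eqOn (Dn_add su sv k) It).
by apply: derivableD; [exact: su|exact: sv].
Qed.

Lemma drv_add (f g : R -> R) t : derivable f t 1 -> derivable g t 1 ->
  derivable (fun s => f s + g s) t 1.
Proof. exact: derivableD. Qed.

Lemma drv_opp (f : R -> R) t : derivable f t 1 -> derivable (fun s => - f s) t 1.
Proof. exact: derivableN. Qed.

Lemma drv_mul (f g : R -> R) t : derivable f t 1 -> derivable g t 1 ->
  derivable (fun s => f s * g s) t 1.
Proof. exact: derivableM. Qed.

Lemma drv_cst (c : R) t : derivable (fun _ : R => c) t 1.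
Proof. exact: derivable_cst. Qed.

Lemma der_opp (f : R -> R) t : derivable f t 1 ->
  derive1 (fun s => - f s) t = - derive1 f t.
Proof. by move=> df; rewrite !derive1E -deriveN. Qed.

Lemma der_cmul (f : R -> R) c t : derivable f t 1 ->
  derive1 (fun s => c * f s) t = c * derive1 f t.
Proof. by move=> df; rewrite derive1Ml. Qed.

Lemma smooth_mul u0 v0 : smooth_on I u0 -> smooth_on I v0 -> smooth_on I (fun s => u0 s * v0 s).
Proof.
suff H : forall k u v, smooth_on I u -> smooth_on I v -> smoothk k (fun s => u s * v s).
  by move=> su sv k t It; apply: (H k.+1 u0 v0 su sv k (ltnSn k)).
elim=> [|k IH] u v su sv [|j] // jk t It.
  by rewrite ?derive1n0; apply: derivableM; [exact: su 0%N t It|exact: sv 0%N t It].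
rewrite derive1Sn.
have e : eqOn (derive1 (fun s => u s * v s))
          (fun s => derive1 u s * v s + u s * derive1 v s).
  by move=> s Is; rewrite der_mul; [by []|exact: smooth_derivable su Is|exact: smooth_derivable sv Is].
apply: (derivable_eqOn (eqOn_der e j) It).
have s1 := IH _ _ (smooth_D su) sv.
have s2 := IH _ _ su (smooth_D sv).
have jk' : (j < k)%N by [].
have e2 := Dn_add_k (k := j) (fun i ij => s1 i (ltn_trans ij jk'))
                                  (fun i ij => s2 i (ltn_trans ij jk')).
apply: (derivable_eqOn e2 It).
by apply: derivableD; [exact: s1|exact: s2].
Qed.

Lemma smooth_opp u : smooth_on I u -> smooth_on I (fun s => - u s).
Proof.
move=> su; apply: (@smooth_eqOn _ (fun s => (-1) * u s)).
  by move=> s _; rewrite mulN1r.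
apply: smooth_mul; [exact: smooth_cst|exact: su].
Qed.

Lemma smooth_sub u v : smooth_on I u -> smooth_on I v -> smooth_on I (fun s => u s - v s).
Proof. by move=> su sv; exact: (smooth_add su (smooth_opp sv)). Qed.

Lemma der_div (g h : R -> R) t : derivable g t 1 -> derivable h t 1 -> h t != 0 ->
  derive1 (fun s => g s / h s) t = (derive1 g t * h t - g t * derive1 h t) / (h t * h t).
Proof.
move=> dg dh h0.
rewrite (der_mul dg); last exact: derivableV.
have -> : derive1 (fun s => (h s)^-1) t = - (h t) ^- 2 * derive1 h t.
  by rewrite !derive1E (deriveV h0 dh).
by field.
Qed.

Lemma smooth_div g h : smooth_on I g -> smooth_on I h -> (forall t, I t -> h t != 0) ->
  smooth_on I (fun s => g s / h s).
Proof.
move=> sg sh hn0 k; elim: k g h sg sh hn0 => [|k IH] g h sg sh hn0 t It.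
  rewrite derive1n0; apply: derivableM; first exact: smooth_derivable sg It.
  by apply: derivableV; [exact: hn0|exact: smooth_derivable sh It].
rewrite derive1Sn.
have e : eqOn (derive1 (fun s => g s / h s))
   (fun s => (derive1 g s * h s - g s * derive1 h s) / (h s * h s)).
  move=> s Is; rewrite der_div; [by []| | |];
    [exact: smooth_derivable sg Is|exact: smooth_derivable sh Is|exact: hn0].
apply: (derivable_eqOn (eqOn_der e k) It).
apply: (IH (fun s => derive1 g s * h s - g s * derive1 h s) (fun s => h s * h s)).
- exact: (smooth_sub (smooth_mul (smooth_D sg) sh) (smooth_mul sg (smooth_D sh))).
- exact: smooth_mul.
- by move=> s Is; rewrite mulf_neq0 //; exact: hn0.
- exact: It.
Qed.


Lemma drv_ln f t : smooth_on I f -> (forall s, I s -> f s != 0) -> I t ->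
  derivable (fun s => ln `|f s|) t 1.
Proof.
move=> sf fn0 It.
have e : eqOn (fun s => ln `|f s|) (fun s => 2^-1 * ln (f s ^+ 2)).
  move=> s Is; rewrite -(real_normK (num_real (f s))) lnXn ?normr_gt0 ?fn0 //.
  by rewrite mulr2n; field.
have f2 : 0 < f t ^+ 2 by rewrite lt_def sqr_ge0 sqrf_eq0 fn0.
have dsq : derivable (fun s => f s ^+ 2) t 1.
  apply: (smooth_derivable _ It); apply: (@smooth_eqOn _ (fun s => f s * f s)).
    by move=> s _; rewrite expr2.
  exact: smooth_mul.
apply: (derivable_eqOn e It); apply: drv_mul; first exact: drv_cst.
change (derivable (@ln R \o (fun s => f s ^+ 2)) t 1).
by apply/derivable1_diffP; apply: differentiable_comp;
    [exact/derivable1_diffP|apply/derivable1_diffP; apply: ex_derive; exact: is_derive1_ln].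
Qed.

Lemma der_ln f t : smooth_on I f -> (forall s, I s -> f s != 0) -> I t ->
  derive1 (fun s => ln `|f s|) t = derive1 f t / f t.
Proof.
move=> sf fn0 It.
have e : eqOn (fun s => ln `|f s|) (fun s => 2^-1 * ln (f s ^+ 2)).
  move=> s Is; rewrite -(real_normK (num_real (f s))) lnXn ?normr_gt0 ?fn0 //.
  by rewrite mulr2n; field.
have df := smooth_derivable sf It.
have f2 : 0 < f t ^+ 2 by rewrite lt_def sqr_ge0 sqrf_eq0 fn0.
have dsq : derivable (fun s => f s ^+ 2) t 1.
  apply: (smooth_derivable _ It); apply: (@smooth_eqOn _ (fun s => f s * f s)).
    by move=> s _; rewrite expr2.
  exact: smooth_mul.
rewrite (der_eqOn e It) der_cmul; last first.
  change (derivable (@ln R \o (fun s => f s ^+ 2)) t 1).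
  by apply/derivable1_diffP; apply: differentiable_comp;
    [exact/derivable1_diffP|apply/derivable1_diffP; apply: ex_derive; exact: is_derive1_ln].
have -> : derive1 (fun s => ln (f s ^+ 2)) t = derive1 (@ln R \o (fun s => f s ^+ 2)) t by [].
rewrite (derive1_comp dsq); last by apply: ex_derive; exact: is_derive1_ln.
have -> : derive1 (@ln R) (f t ^+ 2) = (f t ^+ 2)^-1.
  by rewrite derive1E; have [_ ->] := is_derive1_ln f2.
have -> : derive1 (fun s => f s ^+ 2) t = derive1 (fun s => f s * f s) t.
  by congr derive1; apply/funext => s; rewrite expr2.
rewrite der_mul; [|exact: df|exact: df].
have := fn0 t It; move=> ft0; field; exact: ft0.
Qed.


Lemma smooth_ln f : smooth_on I f -> (forall s, I s -> f s != 0) ->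
  smooth_on I (fun s => ln `|f s|).
Proof.
move=> sf fn0 [|k] t It; first by rewrite derive1n0; exact: drv_ln.
rewrite derive1Sn.
have e : eqOn (derive1 (fun s => ln `|f s|)) (fun s => derive1 f s / f s).
  by move=> s Is; exact: der_ln.
apply: (derivable_eqOn (eqOn_der e k) It).
exact: (smooth_div (smooth_D sf) sf fn0).
Qed.

Lemma Dn_opp u : smooth_on I u -> forall k,
  eqOn (derive1n k (fun s => - u s)) (fun t => - derive1n k u t).
Proof.
move=> su k; elim: k => [|k IH] t It; first by rewrite !derive1n0.
by rewrite !derive1nS (der_eqOn IH It) der_opp //; exact: su.
Qed.

Lemma derivable_sumn n (F : nat -> R -> R) t : (forall l, (l < n)%N -> derivable (F l) t 1) ->
  derivable (fun s => \sum_(l < n) F l s) t 1.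
Proof.
elim: n => [|n IH] dF.
  have -> : (fun s => \sum_(l < 0) F l s) = cst 0.
    by apply/funext => s; rewrite big_ord0.
  exact: derivable_cst.
have -> : (fun s => \sum_(l < n.+1) F l s) = (fun s => \sum_(l < n) F l s + F n s).
  by apply/funext => s; rewrite big_ord_recr.
apply: derivableD; last exact: dF.
by apply: IH => l ln; apply: dF; exact: ltnW.
Qed.

Lemma der_sumn n (F : nat -> R -> R) t : (forall l, (l < n)%N -> derivable (F l) t 1) ->
  derive1 (fun s => \sum_(l < n) F l s) t = \sum_(l < n) derive1 (F l) t.
Proof.
elim: n => [|n IH] dF.
  have -> : (fun s => \sum_(l < 0) F l s) = cst 0.
    by apply/funext => s; rewrite big_ord0.
  by rewrite derive1_cst big_ord0.
have -> : (fun s => \sum_(l < n.+1) F l s) = (fun s => \sum_(l < n) F l s + F n s).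
  by apply/funext => s; rewrite big_ord_recr.
have dF' : forall l, (l < n)%N -> derivable (F l) t 1 by move=> l ln; apply: dF; exact: ltnW.
rewrite der_add; [|exact: derivable_sumn|exact: dF].
by rewrite IH // big_ord_recr.
Qed.

Lemma pascal_sum (a : nat -> nat -> R) i :
  \sum_(l < i.+1) 'C(i, l)%:R * (a (i - l).+1 l + a (i - l)%N l.+1) =
  \sum_(l < i.+2) 'C(i.+1, l)%:R * a (i.+1 - l)%N l.
Proof.
have bz : forall l, bump 0 l = l.+1 by [].
rewrite [RHS]big_ord_recl /= subn0 bin0 mul1r.
under [X in _ = _ + X]eq_bigr => l _ do rewrite bz subSS binS natrD mulrDl.
rewrite big_split /= addrA.
under eq_bigr => l _ do rewrite mulrDr.
rewrite big_split /=; congr (_ + _).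
rewrite big_ord_recl [in RHS]big_ord_recr /= bin0 subn0 mul1r bin_small // mul0r addr0.
congr (_ + _); apply: eq_bigr => l _.
by rewrite ?bz ?lift0 subnSK.
Qed.


Lemma leibniz g u : smooth_on I g -> smooth_on I u -> forall i,
  eqOn (derive1n i (fun s => g s * u s))
    (fun t => \sum_(l < i.+1) 'C(i, l)%:R * (derive1n (i - l) g t * derive1n l u t)).
Proof.
move=> sg su; elim=> [|i IH] t It.
  by rewrite big_ord1 /= mul1r.
rewrite derive1nS (der_eqOn IH It).
rewrite (der_sumn (F := fun l t => 'C(i, l)%:R * (derive1n (i - l) g t * derive1n l u t))); last first.
  move=> l _; apply: derivableM; first exact: derivable_cst.
  by apply: derivableM; [exact: sg|exact: su].
rewrite -(pascal_sum (fun p q => derive1n p g t * derive1n q u t)).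
apply: eq_bigr => l _.
rewrite der_cmul; last by apply: derivableM; [exact: sg|exact: su].
rewrite der_mul; [|exact: sg|exact: su].
by rewrite -!derive1nS.
Qed.


Lemma Wr_factor k g (F G : nat -> R -> R) t : smooth_on I g ->
  (forall j, (j < k)%N -> smooth_on I (F j)) ->
  (forall j, (j < k)%N -> eqOn (G j) (fun s => g s * F j s)) -> I t ->
  \det (\matrix_(i < k, j < k) derive1n i (G j) t) =
  g t ^+ k * \det (\matrix_(i < k, j < k) derive1n i (F j) t).
Proof.
move=> sg sF eG It.
pose L := \matrix_(i < k, l < k) ('C(i, l)%:R * derive1n (i - l) g t).
have -> : \matrix_(i < k, j < k) derive1n i (G j) t =
          L *m \matrix_(i < k, j < k) derive1n i (F j) t.
  apply/matrixP => i j; rewrite !mxE.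
  rewrite (eqOn_der (eG j (ltn_ord j)) i It) (leibniz sg (sF j (ltn_ord j)) i It).
  rewrite (big_ord_widen k (fun l => 'C(i, l)%:R * (derive1n (i - l) g t * derive1n l (F j) t)) (ltn_ord i)).
  rewrite big_mkcond; apply: eq_bigr => l _; rewrite !mxE mulrA.
  case: ifP => // /negbT; rewrite -leqNgt => hl.
  by rewrite bin_small // !mul0r.
rewrite det_mulmx det_trig; last first.
  by apply/is_trig_mxP => i j ij; rewrite mxE bin_small // mul0r.
congr (_ * _).
rewrite (eq_bigr (fun _ => g t)); last by move=> i _; rewrite mxE binn subnn derive1n0 mul1r.
by rewrite prodr_const card_ord.
Qed.

Lemma det_col0 k (A : 'M[R]_k.+1) : (forall i : 'I_k.+1, i != ord0 -> A i ord0 = 0) ->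
  \det A = A ord0 ord0 * \det (\matrix_(i < k, j < k) A (lift ord0 i) (lift ord0 j)).
Proof.
move=> A0; rewrite (expand_det_col A ord0) big_ord_recl.
rewrite big1 ?addr0; last by move=> i _; rewrite A0 ?mul0r // neq_lift.
congr (_ * _); rewrite /cofactor /= expr0 mul1r; congr (\det _).
by apply/matrixP => i j; rewrite !mxE.
Qed.


Lemma derive1n2 (f : R -> R) : derive1n 2 f = derive1 (derive1 f).
Proof. by rewrite derive1nS derive1n1. Qed.

Lemma Wr2E (f g : R -> R) z : Wr2 f g z = f z * derive1 g z - g z * derive1 f z.
Proof.
rewrite /Wr2 /Wr (expand_det_row _ ord0) !big_ord_recl big_ord0 addr0.
rewrite /cofactor !det_mx11 !mxE /=.
have -> : (0 + bump 0 0 = 1)%N by [].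
by rewrite expr0 mul1r expr1 mulN1r mulrN.
Qed.

Lemma Wr2_eqOn (f f' g g' : R -> R) z : eqOn f f' -> eqOn g g' -> I z ->
  Wr2 f g z = Wr2 f' g' z.
Proof.
move=> ff gg Iz; rewrite !Wr2E (ff z Iz) (gg z Iz) (der_eqOn ff Iz) (der_eqOn gg Iz).
by [].
Qed.

Lemma theta0 (psi : nat -> R -> R) : theta psi 0 = fun _ => 1.
Proof. by apply/funext => z; rewrite /theta /Wr det_mx00. Qed.

Lemma theta1 (psi : nat -> R -> R) : theta psi 1 = psi 1%N.
Proof. by apply/funext => z; rewrite /theta /Wr det_mx11 mxE derive1n0. Qed.

Section Darboux.
Variables V0 p : R -> R.
Hypothesis sV0 : smooth_on I V0.
Hypothesis sp : smooth_on I p.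
Hypothesis pn0 : forall s, I s -> p s != 0.
Hypothesis Hp : forall s, I s -> derive1n 2 p s + V0 s * p s = 0.

Definition dw s := derive1 p s / p s.
Definition dV1 s := V0 s + 2 * derive1n 2 (fun t => ln `|p t|) s.
Definition dA f s := derive1 f s - dw s * f s.

Lemma sw : smooth_on I dw.
Proof. exact: smooth_div (smooth_D sp) sp pn0. Qed.

Lemma sdw : smooth_on I (derive1 dw).
Proof. exact: smooth_D sw. Qed.

Lemma dV1_eq : eqOn dV1 (fun s => V0 s + 2 * derive1 dw s).
Proof.
move=> s Is; rewrite /dV1 derive1n2; congr (_ + 2 * _).
apply: der_eqOn Is => u Iu; exact: der_ln.
Qed.

Lemma sV1 : smooth_on I dV1.
Proof.
apply: smooth_eqOn dV1_eq _; apply: (smooth_add sV0).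
by apply: smooth_mul; [exact: smooth_cst|exact: sdw].
Qed.

Lemma w1 : eqOn (derive1 dw) (fun s => - V0 s - dw s ^+ 2).
Proof.
move=> s Is; rewrite /dw der_div; first last.
- exact: pn0.
- exact: smooth_derivable sp Is.
- exact: smooth_derivable (smooth_D sp) Is.
have := Hp Is; rewrite derive1n2 => H.
have -> : derive1 (derive1 p) s = - V0 s * p s by apply/eqP; rewrite mulNr -addr_eq0 H.
move: (derive1 p s) (V0 s) (p s) (pn0 Is) => x y z h.
field.
exact: h.
Qed.

Lemma w2 : eqOn (derive1 (derive1 dw)) (fun s => - derive1 V0 s - 2 * dw s * derive1 dw s).
Proof.
move=> s Is; rewrite (der_eqOn w1 Is).
have dV := smooth_derivable sV0 Is; have dW := smooth_derivable sw Is.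
have dW2 : derivable (fun s => dw s * dw s) s 1 by exact: drv_mul.
have -> : (fun s => - V0 s - dw s ^+ 2) = (fun s => - V0 s + - (dw s * dw s)).
  by apply/funext => u; rewrite expr2.
rewrite (der_add (drv_opp dV) (drv_opp dW2)) (der_opp dV) (der_opp dW2) (der_mul dW dW).
gen_der; ring.
Qed.

Lemma sA f : smooth_on I f -> smooth_on I (dA f).
Proof. by move=> sf; exact: (smooth_sub (smooth_D sf) (smooth_mul sw sf)). Qed.

Lemma DA f : smooth_on I f -> eqOn (derive1 (dA f))
  (fun s => derive1 (derive1 f) s + - (derive1 dw s * f s + dw s * derive1 f s)).
Proof.
move=> sf s Is.
have d1 := smooth_derivable (smooth_D sf) Is; have d0 := smooth_derivable sf Is.
have dW := smooth_derivable sw Is.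
rewrite /dA (der_add d1 (drv_opp (drv_mul dW d0))) (der_opp (drv_mul dW d0)) (der_mul dW d0).
by [].
Qed.

Lemma intertw f t : smooth_on I f -> I t ->
  derive1n 2 (dA f) t + dV1 t * dA f t =
  derive1 (fun s => derive1n 2 f s + V0 s * f s) t - dw t * (derive1n 2 f t + V0 t * f t).
Proof.
move=> sf It.
have d2 := smooth_derivable (smooth_D (smooth_D sf)) It.
have d1 := smooth_derivable (smooth_D sf) It; have d0 := smooth_derivable sf It.
have dW := smooth_derivable sw It; have dW1 := smooth_derivable sdw It.
have dV := smooth_derivable sV0 It.
rewrite derive1n2 (der_eqOn (DA sf) It).
rewrite (der_add d2 (drv_opp (drv_add (drv_mul dW1 d0) (drv_mul dW d1)))).
rewrite (der_opp (drv_add (drv_mul dW1 d0) (drv_mul dW d1))).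
rewrite (der_add (drv_mul dW1 d0) (drv_mul dW d1)) (der_mul dW1 d0) (der_mul dW d1).
have -> : (fun s => derive1n 2 f s + V0 s * f s) = (fun s => derive1 (derive1 f) s + V0 s * f s).
  by apply/funext => u; rewrite derive1n2.
rewrite (der_add d2 (drv_mul dV d0)) (der_mul dV d0).
rewrite (w2 It) (dV1_eq It) /dA !derive1n2.
gen_der; ring.
Qed.

Lemma darboux_next f g c : smooth_on I f -> smooth_on I g ->
  (forall s, I s -> - (derive1n 2 f s + V0 s * f s) = c * g s) ->
  forall t, I t -> - (derive1n 2 (dA f) t + dV1 t * dA f t) = c * dA g t.
Proof.
move=> sf sg Hf t It.
rewrite (intertw sf It).
have e : eqOn (fun s => derive1n 2 f s + V0 s * f s) (fun s => - (c * g s)).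
  by move=> s Is; rewrite -(Hf s Is) opprK.
have dg := smooth_derivable sg It.
rewrite (der_eqOn e It) (der_opp (drv_mul (drv_cst (c:=c) (t:=t)) dg)) (der_cmul c dg) (e t It) /dA.
gen_der; ring.
Qed.

Lemma dA_p : eqOn (dA p) (fun _ => 0).
Proof.
move=> s Is; rewrite /dA /dw; move: (pn0 Is); gen_der; move: (p s) => x xn0.
by field.
Qed.

Lemma Dinvp : eqOn (derive1 (fun s => 1 / p s)) (fun s => - derive1 p s / (p s * p s)).
Proof.
move=> s Is.
rewrite (der_div (drv_cst (c:=1) (t:=s)) (smooth_derivable sp Is) (pn0 Is)) derive1_cst.
by rewrite mul0r mul1r sub0r.
Qed.

Lemma invp_sol t : I t -> derive1n 2 (fun s => 1 / p s) t + dV1 t * (1 / p t) = 0.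
Proof.
move=> It.
have d0 := smooth_derivable sp It; have d1 := smooth_derivable (smooth_D sp) It.
rewrite derive1n2 (der_eqOn Dinvp It).
rewrite (der_div (drv_opp d1) (drv_mul d0 d0)); last by rewrite mulf_neq0 // pn0.
rewrite (der_opp d1) (der_mul d0 d0) (dV1_eq It) (w1 It).
have := Hp It; rewrite derive1n2 => H.
have -> : derive1 (derive1 p) t = - V0 t * p t by apply/eqP; rewrite mulNr -addr_eq0 H.
rewrite /dw; move: (pn0 It); gen_der; move: (p t) (V0 t) => x y xn0.
by field.
Qed.

Lemma base_wr f c t : smooth_on I f -> I t ->
  (forall s, I s -> - (derive1n 2 f s + V0 s * f s) = c * p s) ->
  Wr2 (dA f) (fun s => 1 / p s) t = c.
Proof.
move=> sf It Hf.
have d0 := smooth_derivable sp It.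
rewrite Wr2E (Dinvp It) (DA sf It) (w1 It).
have := Hf t It; rewrite derive1n2 => H.
have -> : derive1 (derive1 f) t = - V0 t * f t - c * p t.
  by rewrite -H; ring.
rewrite /dA /dw; move: (pn0 It); gen_der; move: (p t) (V0 t) (f t) => x y z xn0.
by field.
Qed.

End Darboux.

Lemma Dn_cst (c : R) k : derive1n k.+1 (fun _ : R => c) = cst 0.
Proof.
elim: k => [|k IH]; first by apply/funext => s; rewrite derive1n1 derive1_cst.
by rewrite derive1nS IH; apply/funext => s; rewrite derive1_cst.
Qed.

Lemma theta_step (psi : nat -> R -> R) k t :
  (forall j, (1 <= j <= k.+1)%N -> smooth_on I (psi j)) ->
  (forall s, I s -> psi 1%N s != 0) -> I t ->
  theta psi k.+1 t = psi 1%N t * theta (fun j => dA (psi 1%N) (psi j.+1)) k t.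
Proof.
move=> spsi p0 It.
set p := psi 1%N.
have sp : smooth_on I p by apply: spsi.
pose u j := fun s => psi j.+1 s / p s.
have su : forall j, (j < k.+1)%N -> smooth_on I (u j).
  by move=> j jk; apply: smooth_div => //; apply: spsi; rewrite ltnS.
have e1 : \det (\matrix_(i < k.+1, j < k.+1) derive1n i (psi j.+1) t) =
          p t ^+ k.+1 * \det (\matrix_(i < k.+1, j < k.+1) derive1n i (u j) t).
  apply: (Wr_factor (F := u) (G := fun j => psi j.+1) sp su _ It) => j jk s Is.
  by rewrite /u mulrC divfK //; apply: p0.
have e2 : \det (\matrix_(i < k.+1, j < k.+1) derive1n i (u j) t) =
          \det (\matrix_(i < k, j < k) derive1n i (derive1 (u j.+1)) t).
  have u0 : eqOn (u 0%N) (fun _ => 1).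
    by move=> s Is; rewrite /u divff //; apply: p0.
  rewrite det_col0; last first.
    move=> i i0; rewrite mxE (eqOn_der u0 i It).
    have : (0 < i)%N by rewrite lt0n.
    by case: (nat_of_ord i) => [|m] // _; rewrite Dn_cst.
  rewrite mxE (eqOn_der u0 0 It) derive1n0 mul1r.
  congr (\det _); apply/matrixP => i j; rewrite !mxE.
  by rewrite !lift0 derive1Sn.
have e3 : theta (fun j => dA p (psi j.+1)) k t =
          p t ^+ k * \det (\matrix_(i < k, j < k) derive1n i (derive1 (u j.+1)) t).
  rewrite /theta /Wr.
  apply: (Wr_factor (F := fun j => derive1 (u j.+1)) (G := fun j => dA p (psi j.+2)) sp _ _ It).
    by move=> j jk; apply: smooth_D; apply: su.
  move=> j jk s Is.
  have ps : p s != 0 by apply: p0.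
  have d1 : derivable (psi j.+2) s 1.
    by apply: (smooth_derivable _ Is); apply: spsi.
  have d0 := smooth_derivable sp Is.
  rewrite /u der_div //.
  rewrite /dA /dw; move: ps; gen_der; move: (p s) (psi j.+2 s) => x y ps.
  by field.
rewrite e3.
have -> : theta psi k.+1 t = \det (\matrix_(i < k.+1, j < k.+1) derive1n i (psi j.+1) t) by [].
by rewrite e1 e2 exprS mulrA.
Qed.

Lemma smooth_theta k : forall psi : nat -> R -> R,
  (forall j, (1 <= j <= k)%N -> smooth_on I (psi j)) ->
  (forall j s, (1 <= j <= k)%N -> I s -> theta psi j s != 0) ->
  smooth_on I (theta psi k).
Proof.
elim: k => [|k IH] psi spsi Hth; first by rewrite theta0; exact: smooth_cst.
have sp : smooth_on I (psi 1%N) by apply: spsi; lia.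
have pn0 : forall s, I s -> psi 1%N s != 0.
  by move=> s Is; have := Hth 1%N s isT Is; rewrite theta1.
apply: (@smooth_eqOn _ (fun t => psi 1%N t * theta (fun j => dA (psi 1%N) (psi j.+1)) k t)).
  by move=> t It; apply: theta_step => // j hj; apply: spsi.
apply: (smooth_mul sp); apply: IH.
  by move=> j hj; apply: sA => //; apply: spsi; lia.
move=> j s hj Is.
rewrite -(mulKf (pn0 s Is) (theta (fun j => dA (psi 1%N) (psi j.+1)) j s)).
rewrite -theta_step //; last by move=> i hi; apply: spsi; lia.
rewrite mulf_neq0 //; last by apply: Hth => //; lia.
by rewrite invr_eq0; exact: pn0.
Qed.

Definition VnF (V0 : R -> R) (psi : nat -> R -> R) n :=
  fun z => V0 z + 2 * derive1n 2 (fun t => ln `|theta psi n t|) z.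
Definition phiF (psi : nat -> R -> R) n := fun t => theta psi n.+1 t / theta psi n t.
Definition phiI (psi : nat -> R -> R) n := fun t => theta psi n.-1 t / theta psi n t.

Lemma core n : forall N V0 (psi : nat -> R -> R) (C : nat -> R),
  smooth_on I V0 ->
  (forall j, (1 <= j <= N.+1)%N -> smooth_on I (psi j)) ->
  (forall z, I z -> - (derive1n 2 (psi 1%N) z + V0 z * psi 1%N z) = 0) ->
  (forall j z, (1 <= j <= N)%N -> I z ->
     - (derive1n 2 (psi j.+1) z + V0 z * psi j.+1 z) = C j * psi j z) ->
  (forall j z, (1 <= j <= N.+1)%N -> I z -> theta psi j z != 0) ->
  (1 <= n <= N)%N ->
  forall z, I z ->
  [/\ derive1n 2 (phiF psi n) z + VnF V0 psi n z * phiF psi n z = 0,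
      derive1n 2 (phiI psi n) z + VnF V0 psi n z * phiI psi n z = 0 &
      Wr2 (phiF psi n) (phiI psi n) z = C n].
Proof.
elim: n => [|n IH] N V0 psi C sV0 spsi H1 Hj Hth hn z Iz; first by move: hn; lia.
set p := psi 1%N.
have sp : smooth_on I p by apply: spsi; lia.
have pn0 : forall s, I s -> p s != 0.
  by move=> s Is; have := Hth 1%N s isT Is; rewrite theta1.
have Hp : forall s, I s -> derive1n 2 p s + V0 s * p s = 0.
  by move=> s Is; apply/eqP; rewrite -oppr_eq0 (H1 s Is).
have sp2 : smooth_on I (psi 2%N) by apply: spsi; lia.
have H2 := Hj 1%N.
case: n IH hn => [|m] IH hn.
-
  have ePhi : eqOn (phiF psi 1) (dA p (psi 2%N)).
    move=> t It; rewrite /phiF (theta_step (k := 1) (fun j hj => spsi j ltac:(lia)) pn0 It).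
    rewrite theta1 theta1 /= mulrAC divff; [by rewrite mul1r|exact: pn0].
  have ePhiI : phiI psi 1 = (fun s => 1 / p s) by rewrite /phiI /= theta0 theta1.
  have eV : VnF V0 psi 1 = dV1 V0 p by rewrite /VnF theta1.
  have H2' : forall s, I s -> - (derive1n 2 (psi 2%N) s + V0 s * psi 2%N s) = C 1%N * p s.
    by move=> s Is; apply: H2 => //; lia.
  split.
  + rewrite (eqOn_der ePhi 2 Iz) (ePhi z Iz) eV; apply/eqP; rewrite -oppr_eq0; apply/eqP.
    rewrite (darboux_next sV0 sp pn0 Hp sp2 sp H2' Iz) (dA_p pn0 Iz).
    by rewrite mulr0.
  + by rewrite ePhiI eV; apply: invp_sol.
  + rewrite (Wr2_eqOn (g' := fun s => 1 / p s) ePhi _ Iz); last by rewrite ePhiI.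
    exact: (base_wr sp pn0 Hp sp2 Iz H2').
-
  case: N spsi Hj Hth hn H2 => [|N] spsi Hj Hth hn H2; first by move: hn; lia.
  pose psi' := fun j => dA p (psi j.+1).
  have eTh : forall k, (k <= N.+1)%N -> eqOn (theta psi' k) (fun t => theta psi k.+1 t / p t).
    move=> k hk t It; rewrite (theta_step (k := k) (fun j hj => spsi j ltac:(lia)) pn0 It).
    rewrite mulrAC divff; [by rewrite mul1r|exact: pn0].
  have [A' B' C'] := IH N (dV1 V0 p) psi' (fun j => C j.+1)
     (sV1 sV0 sp pn0)
     (fun j hj => sA sp pn0 (spsi j.+1 ltac:(lia)))
     (fun t It => ltac:(rewrite (darboux_next sV0 sp pn0 Hp sp2 sp
                          (fun s Is => H2 s ltac:(lia) Is) It) (dA_p pn0 It) mulr0; done))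
     (fun j t hj It => darboux_next sV0 sp pn0 Hp (spsi j.+2 ltac:(lia)) (spsi j.+1 ltac:(lia))
                          (fun s Is => Hj j.+1 s ltac:(lia) Is) It)
     ltac:(move=> j t hj It; rewrite (eTh j ltac:(lia) t It) mulf_neq0 //;
            [apply: Hth => //; lia | rewrite invr_eq0; exact: pn0])
     ltac:(lia) z Iz.
  have th2 : forall t, I t -> theta psi m.+2 t != 0 by move=> t It; apply: Hth => //; lia.
  have th1 : forall t, I t -> theta psi m.+1 t != 0 by move=> t It; apply: Hth => //; lia.
  have th3 : forall t, I t -> theta psi m.+3 t != 0 by move=> t It; apply: Hth => //; lia.
  have eF : eqOn (phiF psi' m.+1) (phiF psi m.+2).
    move=> t It; rewrite /phiF (eTh m.+2 ltac:(lia) t It) (eTh m.+1 ltac:(lia) t It).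
    move: (pn0 t It) (th2 t It); move: (p t) (theta psi m.+2 t) => x y xn0 yn0.
    by field; rewrite ?xn0 ?yn0.
  have eI : eqOn (phiI psi' m.+1) (phiI psi m.+2).
    move=> t It; rewrite /phiI /= (eTh m ltac:(lia) t It) (eTh m.+1 ltac:(lia) t It).
    move: (pn0 t It) (th2 t It); move: (p t) (theta psi m.+2 t) => x y xn0 yn0.
    by field; rewrite ?xn0 ?yn0.
  have sT : smooth_on I (theta psi m.+2).
    apply: smooth_theta.
      by move=> j hj; apply: spsi; lia.
    by move=> j t hj It; apply: Hth => //; lia.
  have sL := smooth_ln sT th2.
  have sLp := smooth_ln sp pn0.
  have eL : eqOn (fun t => ln `|theta psi' m.+1 t|)
                 (fun t => ln `|theta psi m.+2 t| + - ln `|p t|).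
    move=> t It; rewrite (eTh m.+1 ltac:(lia) t It) normf_div ln_div //.
      by rewrite posrE normr_gt0; exact: th2.
    by rewrite posrE normr_gt0; exact: pn0.
  have eV : VnF (dV1 V0 p) psi' m.+1 z = VnF V0 psi m.+2 z.
    rewrite /VnF /dV1 (eqOn_der eL 2 Iz) (Dn_add sL (smooth_opp sLp) 2 Iz) (Dn_opp sLp 2 Iz).
    have E : forall u v : R, V0 z + 2 * u + 2 * (v + - u) = V0 z + 2 * v by move=> u v; ring.
    exact: E.
  split.
  + by rewrite -(eqOn_der eF 2 Iz) -(eF z Iz) -eV.
  + by rewrite -(eqOn_der eI 2 Iz) -(eI z Iz) -eV.
  + by rewrite -(Wr2_eqOn eF eI Iz).
Qed.

End Infra.

Unset Implicit Arguments.
Set Strict Implicit.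

Theorem mainTheorem14 (R : realType) (a b : \bar R) (N : nat)
    (V0 : R -> R) (psi : nat -> R -> R) (C : nat -> R) :
  (a < b)%E ->
  smooth_on (open_itv a b) V0 ->
  (forall j, (1 <= j <= N.+1)%N -> smooth_on (open_itv a b) (psi j)) ->
  (forall j, (1 <= j <= N)%N -> C j != 0) ->
  (* H0 psi_1 = 0, with H0 = -(d^2/dz^2 + V0) *)
  (forall z, open_itv a b z ->
     - (derive1n 2 (psi 1%N) z + V0 z * psi 1%N z) = 0) ->
  (* H0 psi_{j+1} = C_j psi_j *)
  (forall j z, (1 <= j <= N)%N -> open_itv a b z ->
     - (derive1n 2 (psi j.+1) z + V0 z * psi j.+1 z) = C j * psi j z) ->
  (forall j z, (1 <= j <= N.+1)%N -> open_itv a b z -> theta psi j z != 0) ->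
  forall n, (1 <= n <= N)%N ->
  let Vn := fun z => V0 z + 2 * derive1n 2 (fun t => ln `|theta psi n t|) z in
  let phi := fun t => theta psi n.+1 t / theta psi n t in
  let phiinv := fun t => theta psi n.-1 t / theta psi n t in
  forall z, open_itv a b z ->
    [/\ derive1n 2 phi z + Vn z * phi z = 0,
        derive1n 2 phiinv z + Vn z * phiinv z = 0,
        Wr2 phi phiinv z = C n &
        derive1n 1 (theta psi n.-1) z * theta psi n.+1 z
          - theta psi n.-1 z * derive1n 1 (theta psi n.+1) z
        = C n * theta psi n z ^+ 2].
Proof.
move=> _ sV0 spsi _ H1 Hj Hth n hn Vn phi phiinv z Iz.
have Iopen := @open_itv_near R a b.
have [A B Cc] := core Iopen sV0 spsi H1 Hj Hth hn Iz.
split => //.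
have sT : forall k, (k <= N.+1)%N -> smooth_on (open_itv a b) (theta psi k).
  move=> k hk; apply: (smooth_theta Iopen).
    by move=> j hj; apply: spsi; lia.
  by move=> j t hj It; apply: Hth => //; lia.
have dm := smooth_derivable (sT n.-1 ltac:(lia)) Iz.
have d0 := smooth_derivable (sT n ltac:(lia)) Iz.
have dp := smooth_derivable (sT n.+1 ltac:(lia)) Iz.
have t0 : theta psi n z != 0 by apply: Hth => //; lia.
rewrite -Cc (Wr2E phi phiinv z) /phi /phiinv (der_div dm d0 t0) (der_div dp d0 t0) !derive1n1.
move: t0; gen_der; move: (theta psi n z) (theta psi n.-1 z) (theta psi n.+1 z) => x y w xn0.
by field.
Qed.
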